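(* Let $p$ be an odd prime, $\underline S$ a $D_{2p}$-Tambara functor, and $a,b\in\underline S(D_{2p}/D_2)$. Then \begin{align*}N_{D_2}^{D_{2p}}(a+b)={}&N_{D_2}^{D_{2p}}(a)+N_{D_2}^{D_{2p}}(b)+\sum_{\underline x\in X}\mathrm{tr}_{D_2}^{D_{2p}}\Big(x_0\prod_{i=1}^{(p-1)/2}N_e^{D_2}\big(\zeta_p^i\,\mathrm{res}^{D_2}_e(x_i)\big)\Big)\\&+\sum_{[\underline y]\in Y}\mathrm{tr}_e^{D_{2p}}\Big(\prod_{i=1}^{p}\zeta_p^i\,\mathrm{res}^{D_2}_e(y_i)\Big),\end{align*} where $X$ is the set of $D_2$-fixed points of $\mathrm{Map}^{D_2}(D_{2p},\{a,b\})$ other than the two constant maps $f_a,f_b$, $x_i=\underline x(\zeta_p^i)$, $Y$ is the set of free $D_{2p}$-orbits in $\mathrm{Map}^{D_2}(D_{2p},\{a,b\})$, and for each $[\underline y]\in Y$ a representative $\underline y$ is chosen and $y_i=\underline y(\zeta_p^i)$; here the values $x_i,y_i\in\{a,b\}$ are read as the corresponding elements of $\underline S(D_{2p}/D_2)$, and $\zeta_p^i$ acts through the Weyl group action on $\underline S(D_{2p}/e)$.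
   Context: $D_{2p}=\langle\tau,\zeta_p\mid\tau^2=\zeta_p^p=(\tau\zeta_p)^2=1\rangle$, $D_2=\langle\tau\rangle$. A Tambara functor has restrictions, transfers and multiplicative norms satisfying the Tambara distributivity relations. $\mathrm{Map}^{D_2}(D_{2p},\{a,b\})$ is the coinduced $D_{2p}$-set of $D_2$-equivariant maps from $D_{2p}$ to the two-element set $\{a,b\}$ with trivial action. *)

(* Defs.v *)
From HB Require Import structures.
From mathcomp Require Import all_boot all_order all_fingroup all_algebra.
Set Implicit Arguments. Unset Strict Implicit. Unset Printing Implicit Defensive.
Import GRing.Theory.

Section GSets.
Variable gT : finGroupType.
Local Open Scope group_scope.

Record gset := GSet {
  gcar :> finType;
  gsact : gT -> gcar -> gcar;
  gsact1 : forall x, gsact 1 x = x;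
  gsactM : forall g h x, gsact (g * h) x = gsact g (gsact h x)
}.

Record gmap (X Y : gset) := GMap {
  gfun :> X -> Y;
  gfunE : forall g x, gfun (gsact g x) = gsact g (gfun x)
}.

Lemma gsactK (X : gset) g (x : X) : gsact g (gsact g^-1 x) = x.
Proof. by rewrite -gsactM mulgV gsact1. Qed.

Lemma gsactVK (X : gset) g (x : X) : gsact g^-1 (gsact g x) = x.
Proof. by rewrite -gsactM mulVg gsact1. Qed.

Definition gid (X : gset) : gmap X X := @GMap X X id (fun _ _ => erefl).

Definition gcomp (X Y Z : gset) (f : gmap Y Z) (h : gmap X Y) : gmap X Z.
Proof.
refine (@GMap X Z (fun x => f (h x)) _).
by move=> g x; rewrite !gfunE.
Defined.

Definition gempty : gset.
Proof.
refine (@GSet void (fun _ x => x) _ _); by [].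
Defined.

Definition gsum_act (X Y : gset) (g : gT) (u : (X + Y)%type) : (X + Y)%type :=
  match u with inl x => inl (gsact g x) | inr y => inr (gsact g y) end.

Definition gsum (X Y : gset) : gset.
Proof.
refine (@GSet (X + Y)%type (gsum_act (X:=X) (Y:=Y)) _ _).
- by case=> x /=; rewrite gsact1.
- by move=> g h [x|x] /=; rewrite gsactM.
Defined.

Definition ginl (X Y : gset) : gmap X (gsum X Y) :=
  @GMap X (gsum X Y) inl (fun _ _ => erefl).
Definition ginr (X Y : gset) : gmap Y (gsum X Y) :=
  @GMap Y (gsum X Y) inr (fun _ _ => erefl).

Section Pullback.
Variables (X Y Z : gset) (f : gmap X Z) (h : gmap Y Z).

Definition pb_type := {xy : X * Y | f xy.1 == h xy.2}.

Definition pb_act (g : gT) (u : pb_type) : pb_type.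
Proof.
refine (exist _ (gsact g (sval u).1, gsact g (sval u).2) _).
by rewrite /= !gfunE (eqP (svalP u)).
Defined.

Definition gpb : gset.
Proof.
refine (@GSet pb_type pb_act _ _).
- by move=> u; apply: val_inj; rewrite /= !gsact1; case: (sval u).
- by move=> g k u; apply: val_inj; rewrite /= !gsactM.
Defined.

Definition pb1 : gmap gpb X.
Proof. by refine (@GMap gpb X (fun u => (sval u).1) _). Defined.
Definition pb2 : gmap gpb Y.
Proof. by refine (@GMap gpb Y (fun u => (sval u).2) _). Defined.
End Pullback.
End GSets.

Section Exp.
Variable gT : finGroupType.
Local Open Scope group_scope.
Variables (A X Y : gset gT) (p : gmap A X) (q : gmap X Y).

(* Pi_q A = { (y, s) | s a section of p over the fibre q^-1(y) };
   s is encoded as a finite function X -> option A, undefined (None)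
   off the fibre. *)
Definition pi_good (ys : Y * {ffun X -> option A}) :=
  [forall x, if q x == ys.1 then
               (if ys.2 x is Some a then p a == x else false)
             else ys.2 x == None].

Definition pi_type := {ys : Y * {ffun X -> option A} | pi_good ys}.

Definition pi_fun (g : gT) (s : {ffun X -> option A}) : {ffun X -> option A} :=
  [ffun x : X => omap (gsact g) (s (gsact g^-1 x))].

Lemma pi_good_act g ys : pi_good ys -> pi_good (gsact g ys.1, pi_fun g ys.2).
Proof.
move=> /forallP H; apply/forallP => x /=; rewrite ffunE.
have := H (gsact g^-1 x).
have -> : (q (gsact g^-1 x) == ys.1) = (q x == gsact g ys.1).
  apply/eqP/eqP => [<-|E]; first by rewrite gfunE gsactK.
  by rewrite gfunE E gsactVK.
case: (q x == _).
  case: (ys.2 _) => //= a /eqP pa.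
  by rewrite gfunE pa gsactK.
by move/eqP ->.
Qed.

Definition pi_act (g : gT) (u : pi_type) : pi_type :=
  exist _ (gsact g (sval u).1, pi_fun g (sval u).2) (pi_good_act g (svalP u)).

Definition gpi : gset gT.
Proof.
refine (@GSet gT pi_type pi_act _ _).
- move=> [[y s] H]; apply: val_inj => /=; rewrite gsact1; congr (_, _).
  apply/ffunP => x; rewrite ffunE invg1 gsact1.
  by case: (s x) => //= a; rewrite gsact1.
- move=> g h [[y s] H]; apply: val_inj => /=; rewrite gsactM; congr (_, _).
  apply/ffunP => x; rewrite !ffunE invMg gsactM.
  by case: (s _) => //= a; rewrite gsactM.
Defined.

Definition pi_proj : gmap gpi Y.
Proof. by refine (@GMap gT gpi Y (fun u => (sval u).1) _). Defined.

(* B = Pi_q A x_Y X, encoded as pairs (u, a) with a the value of the section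
   of u at p a *)
Definition ev_type := {ua : gpi * A | (sval ua.1).2 (p ua.2) == Some ua.2}.

Lemma ev_good_act g (ua : gpi * A) :
  (sval ua.1).2 (p ua.2) == Some ua.2 ->
  (sval (gsact g ua.1)).2 (p (gsact g ua.2)) == Some (gsact g ua.2).
Proof.
move=> /eqP H; rewrite /= ffunE gfunE gsactVK H //.
Qed.

Definition ev_act (g : gT) (u : ev_type) : ev_type :=
  exist _ (gsact g (sval u).1, gsact g (sval u).2) (ev_good_act g (svalP u)).

Definition gev : gset gT.
Proof.
refine (@GSet gT ev_type ev_act _ _).
- move=> u; apply: val_inj. change ((gsact 1 (sval u).1, gsact 1 (sval u).2) = sval u). rewrite !gsact1. by case: (sval u).
- by move=> g h u; apply: val_inj; change ((gsact (g * h) (sval u).1, gsact (g * h) (sval u).2) = (gsact g (gsact h (sval u).1), gsact g (gsact h (sval u).2))); rewrite !gsactM.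
Defined.

Definition ev_eval : gmap gev A.
Proof. by refine (@GMap gT gev A (fun u => (sval u).2) _). Defined.
Definition ev_proj : gmap gev gpi.
Proof. by refine (@GMap gT gev gpi (fun u => (sval u).1) _). Defined.
End Exp.


(* tR f = restriction f^*, tT f = transfer (additive push-forward) T_f,     *)
(* tN f = norm (multiplicative push-forward) N_f.                           *)
Record tambara (gT : finGroupType) := Tambara {
  tS : gset gT -> comPzRingType;
  tR : forall X Y : gset gT, gmap X Y -> tS Y -> tS X;
  tT : forall X Y : gset gT, gmap X Y -> tS X -> tS Y;
  tN : forall X Y : gset gT, gmap X Y -> tS X -> tS Y;
  tR_id : forall X (s : tS X), tR (gid X) s = s;
  tT_id : forall X (s : tS X), tT (gid X) s = s;
  tN_id : forall X (s : tS X), tN (gid X) s = s;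
  tR_comp : forall (X Y Z : gset gT) (f : gmap Y Z) (h : gmap X Y) (s : tS Z),
      tR (gcomp f h) s = tR h (tR f s);
  tT_comp : forall (X Y Z : gset gT) (f : gmap Y Z) (h : gmap X Y) (s : tS X),
      tT (gcomp f h) s = tT f (tT h s);
  tN_comp : forall (X Y Z : gset gT) (f : gmap Y Z) (h : gmap X Y) (s : tS X),
      tN (gcomp f h) s = tN f (tN h s);
  tR_add : forall X Y (f : gmap X Y) (s t : tS Y), tR f (s + t)%R = (tR f s + tR f t)%R;
  tR_mul : forall X Y (f : gmap X Y) (s t : tS Y), tR f (s * t)%R = (tR f s * tR f t)%R;
  tR_one : forall X Y (f : gmap X Y), tR f 1%R = 1%R;
  tT_add : forall X Y (f : gmap X Y) (s t : tS X), tT f (s + t)%R = (tT f s + tT f t)%R;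
  tN_mul : forall X Y (f : gmap X Y) (s t : tS X), tN f (s * t)%R = (tN f s * tN f t)%R;
  tN_one : forall X Y (f : gmap X Y), tN f 1%R = 1%R;
  (* additivity: S(empty) = 0 and S(X + Y) = S(X) x S(Y) via restrictions *)
  t_empty : (1 : tS (gempty gT))%R = 0%R;
  t_sum : forall X Y : gset gT,
      bijective (fun u : tS (gsum X Y) => (tR (ginl X Y) u, tR (ginr X Y) u));
  tT_pb : forall (X Y Z : gset gT) (f : gmap X Z) (h : gmap Y Z) (s : tS X),
      tR h (tT f s) = tT (pb2 f h) (tR (pb1 f h) s);
  tN_pb : forall (X Y Z : gset gT) (f : gmap X Z) (h : gmap Y Z) (s : tS X),
      tR h (tN f s) = tN (pb2 f h) (tR (pb1 f h) s);
  t_distr : forall (A X Y : gset gT) (p : gmap A X) (q : gmap X Y) (s : tS A),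
      tN q (tT p s) = tT (pi_proj p q) (tN (ev_proj p q) (tR (ev_eval p q) s))
}.

Section Orbits.
Variable gT : finGroupType.
Local Open Scope group_scope.

Definition orbit_type (H : {group gT}) := {A : {set gT} | A \in lcosets H [set: gT]}.

Lemma orbit_act_subproof (H : {group gT}) g (A : orbit_type H) :
  g *: sval A \in lcosets H [set: gT].
Proof.
case: A => A /= /lcosetsP [x _ ->]; apply/lcosetsP; exists (g * x).
  by rewrite inE.
by rewrite lcosetM.
Qed.

Definition orbit_act (H : {group gT}) g (A : orbit_type H) : orbit_type H :=
  exist _ (g *: sval A) (orbit_act_subproof g A).

Definition gquot (H : {group gT}) : gset gT.
Proof.
refine (@GSet gT (orbit_type H) (@orbit_act H) _ _).
- by move=> A; apply: val_inj; rewrite /= lcoset1.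
- by move=> g h A; apply: val_inj; rewrite /= lcosetM.
Defined.

Lemma oproj_subproof (K H : {group gT}) (sKH : K \subset H) (A : gquot K) :
  sval A * H \in lcosets H [set: gT].
Proof.
case: A => A /= /lcosetsP [x _ ->]; apply/lcosetsP; exists x; first by rewrite inE.
by rewrite -mulgA mulSGid.
Qed.

Definition oproj (K H : {group gT}) (sKH : K \subset H) : gmap (gquot K) (gquot H).
Proof.
refine (@GMap gT (gquot K) (gquot H)
          (fun A => exist _ (sval A * H) (oproj_subproof sKH A)) _).
by move=> g A; apply: val_inj; rewrite /= mulgA.
Defined.

Lemma rmul_subproof g (A : gquot 1) : sval A :* g \in lcosets 1 [set: gT].
Proof.
case: A => A /= /lcosetsP [x _ ->]; apply/lcosetsP; exists (x * g).
  by rewrite inE.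
by rewrite !mulg1 mulg_set1.
Qed.

Definition rmul (g : gT) : gmap (gquot 1) (gquot 1).
Proof.
refine (@GMap gT (gquot 1) (gquot 1)
          (fun A => exist _ (sval A :* g) (rmul_subproof g A)) _).
by move=> h A; apply: val_inj; rewrite /= mulgA.
Defined.

End Orbits.

(* The operations used in the statement, for G = gT, D_2 = <[tau]>, e = 1.  *)
Section Ops.
Variables (gT : finGroupType) (S : tambara gT) (tau : gT).
Local Open Scope group_scope.

Definition res_e_D2 : tS S (gquot <[tau]>) -> tS S (gquot 1) :=
  tR (oproj (sub1G <[tau]>%G)).
Definition nm_e_D2 : tS S (gquot 1) -> tS S (gquot <[tau]>) :=
  tN (oproj (sub1G <[tau]>%G)).
Definition tr_D2_G : tS S (gquot <[tau]>) -> tS S (gquot [set: gT]) :=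
  tT (oproj (subsetT <[tau]>%G)).
Definition nm_D2_G : tS S (gquot <[tau]>) -> tS S (gquot [set: gT]) :=
  tN (oproj (subsetT <[tau]>%G)).
Definition tr_e_G : tS S (gquot 1) -> tS S (gquot [set: gT]) :=
  tT (oproj (sub1G [set: gT]%G)).
End Ops.
Arguments res_e_D2 {gT} S tau _.
Arguments nm_e_D2 {gT} S tau _.
Arguments tr_D2_G {gT} S tau _.
Arguments nm_D2_G {gT} S tau _.
Arguments tr_e_G {gT} S _.

(* Weyl group action of g on S(G/e): restriction along the G-automorphism
   xe |-> x g^-1 e of G/e (this is a left action). *)
Definition weyl (gT : finGroupType) (S : tambara gT) (g : gT) :
  tS S (gquot 1) -> tS S (gquot 1) := tR (rmul g^-1).

(* The coinduced G-set Map^{D_2}(G, {a,b}), with {a,b} encoded by bool      *)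
(* (true = a, false = b) carrying the trivial D_2-action:                   *)
(*   maps f with f (tau * x) = f x, G acting by (g . f)(x) = f (x * g).     *)
Section Coind.
Variables (gT : finGroupType) (tau : gT).
Local Open Scope group_scope.

Definition coact (g : gT) (f : {ffun gT -> bool}) : {ffun gT -> bool} :=
  [ffun x => f (x * g)].

Definition coind : {set {ffun gT -> bool}} :=
  [set f : {ffun gT -> bool} | [forall x, f (tau * x) == f x]].

Definition Xfix : {set {ffun gT -> bool}} :=
  [set f in coind | [&& coact tau f == f, f != [ffun=> true] & f != [ffun=> false]]].

Definition cofree (f : {ffun gT -> bool}) := [forall g, (coact g f == f) ==> (g == 1)].

Definition coorbit (f : {ffun gT -> bool}) := [set coact g f | g : gT].

Definition free_transversal (Y : {set {ffun gT -> bool}}) : Prop :=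
  Y \subset [set f in coind | cofree f] /\
  forall f, f \in coind -> cofree f -> #|[set y in Y | f \in coorbit y]| = 1%N.
End Coind.
Arguments Xfix {gT} tau.
Arguments coind {gT} tau.
Arguments free_transversal {gT} tau Y.

Definition val2 (gT : finGroupType) (R : Type) (a b : R) (f : {ffun gT -> bool}) (g : gT) : R :=
  if f g then a else b.
Arguments weyl {gT} S g _.

(* Main.v *)
Require Import Defs.
From HB Require Import structures.
From mathcomp Require Import all_boot all_order all_fingroup all_algebra.
From Stdlib Require Import ProofIrrelevance FunctionalExtensionality.
From Stdlib Require List.
From mathcomp Require Import zify.
Set Implicit Arguments. Unset Strict Implicit. Unset Printing Implicit Defensive.
Import GRing.Theory.

Section Gen.
Variable gT : finGroupType.
Local Open Scope group_scope.

Lemma gmap_ext (X Y : gset gT) (f h : gmap X Y) : (forall x, f x = h x) -> f = h.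
Proof.
case: f h => f fE [h hE] /= E.
have ? : f = h by apply: functional_extensionality.
subst h; by rewrite (proof_irrelevance _ fE hE).
Qed.

Section PBG.
Variables (X Y : gset gT) (P : pred (X * Y)).
Hypothesis HP : forall g xy, P xy -> P (gsact g xy.1, gsact g xy.2).
Definition pbg_act g (u : {xy : X * Y | P xy}) : {xy : X * Y | P xy} :=
  exist _ (gsact g (sval u).1, gsact g (sval u).2) (HP g (svalP u)).
Definition pbg : gset gT.
Proof.
refine (@GSet gT {xy : X * Y | P xy} pbg_act _ _).
- by move=> u; apply: val_inj; rewrite /= !gsact1; case: (sval u).
- by move=> g k u; apply: val_inj; rewrite /= !gsactM.
Defined.
Definition pbg1 : gmap pbg X.
Proof. by refine (@GMap gT pbg X (fun u => (sval u).1) _). Defined.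
Definition pbg2 : gmap pbg Y.
Proof. by refine (@GMap gT pbg Y (fun u => (sval u).2) _). Defined.
End PBG.

Lemma GSet_existT (X Y : gset gT) (C : finType) (a a' : gT -> C -> C) p q p' q'
  (k1 : C -> X) (k2 : C -> Y) e1 e2 e1' e2' : a = a' ->
  existT (fun G : gset gT => (gmap G X * gmap G Y)%type) (@GSet gT C a p q)
     (@GMap gT (GSet p q) X k1 e1, @GMap gT (GSet p q) Y k2 e2)
  = existT (fun G : gset gT => (gmap G X * gmap G Y)%type) (@GSet gT C a' p' q')
     (@GMap gT (GSet p' q') X k1 e1', @GMap gT (GSet p' q') Y k2 e2').
Proof.
move=> E; subst a'.
rewrite (proof_irrelevance _ p p') (proof_irrelevance _ q q').
by rewrite (proof_irrelevance _ e1 e1') (proof_irrelevance _ e2 e2').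
Qed.

Lemma HPfh (X Y Z : gset gT) (f : gmap X Z) (h : gmap Y Z) g (xy : X * Y) :
  f xy.1 == h xy.2 -> f (gsact g xy.1) == h (gsact g xy.2).
Proof. by move=> /eqP E; rewrite !gfunE E. Qed.

Lemma gpb_pbg (X Y Z : gset gT) (f : gmap X Z) (h : gmap Y Z) :
  existT (fun G : gset gT => (gmap G X * gmap G Y)%type) (gpb f h) (pb1 f h, pb2 f h)
  = existT _ (@pbg X Y (fun xy => f xy.1 == h xy.2) (@HPfh X Y Z f h))
        (pbg1 _, pbg2 _).
Proof.
rewrite /gpb /pbg /pb1 /pb2 /pbg1 /pbg2.
apply: GSet_existT.
apply: functional_extensionality => g; apply: functional_extensionality => u.
by apply: val_inj.
Qed.

Lemma pb_same (X Y Z Z' : gset gT) (f : gmap X Z) (h : gmap Y Z)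
   (f' : gmap X Z') (h' : gmap Y Z') :
  (forall x y, (f x == h y) = (f' x == h' y)) ->
  existT (fun G : gset gT => (gmap G X * gmap G Y)%type) (gpb f h) (pb1 f h, pb2 f h)
  = existT _ (gpb f' h') (pb1 f' h', pb2 f' h').
Proof.
move=> E; rewrite !gpb_pbg.
have EP : (fun xy : X * Y => f xy.1 == h xy.2) = (fun xy => f' xy.1 == h' xy.2).
  by apply: functional_extensionality => -[x y]; apply: E.
have gen : forall P1 P2 (e : P1 = P2) H1 H2,
  existT (fun G : gset gT => (gmap G X * gmap G Y)%type) (@pbg X Y P1 H1)
     (pbg1 H1, pbg2 H1) = existT _ (@pbg X Y P2 H2) (pbg1 H2, pbg2 H2).
  move=> P1 P2 e; subst P2 => H1 H2; by rewrite (proof_irrelevance _ H1 H2).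
exact: gen EP _ _.
Qed.

End Gen.

Section Tam.
Variables (gT : finGroupType) (S : tambara gT).
Local Open Scope ring_scope.

Lemma tR0 (X Y : gset gT) (f : gmap X Y) : @tR _ S _ _ f 0 = 0.
Proof. by apply: (@addrI _ (@tR _ S _ _ f 0)); rewrite -tR_add !addr0. Qed.
Lemma tT0 (X Y : gset gT) (f : gmap X Y) : @tT _ S _ _ f 0 = 0.
Proof. by apply: (@addrI _ (@tT _ S _ _ f 0)); rewrite -tT_add !addr0. Qed.
Lemma tRB (X Y : gset gT) (f : gmap X Y) u v : @tR _ S _ _ f (u - v) = @tR _ S _ _ f u - @tR _ S _ _ f v.
Proof.
apply: (@addrI _ (@tR _ S _ _ f v)); rewrite -tR_add addrC subrK.
by rewrite addrC subrK.
Qed.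
Lemma tR_sum (X Y : gset gT) (f : gmap X Y) (I : Type) (r : seq I) (P : pred I) F :
  @tR _ S _ _ f (\sum_(i <- r | P i) F i) = \sum_(i <- r | P i) @tR _ S _ _ f (F i).
Proof. by apply: (big_morph _ (@tR_add _ S _ _ f) (tR0 f)). Qed.
Lemma tT_sum (X Y : gset gT) (f : gmap X Y) (I : Type) (r : seq I) (P : pred I) F :
  @tT _ S _ _ f (\sum_(i <- r | P i) F i) = \sum_(i <- r | P i) @tT _ S _ _ f (F i).
Proof. by apply: (big_morph _ (@tT_add _ S _ _ f) (tT0 f)). Qed.
Lemma tR_prod (X Y : gset gT) (f : gmap X Y) (I : Type) (r : seq I) (P : pred I) F :
  @tR _ S _ _ f (\prod_(i <- r | P i) F i) = \prod_(i <- r | P i) @tR _ S _ _ f (F i).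
Proof. by apply: (big_morph _ (@tR_mul _ S _ _ f) (@tR_one _ S _ _ f)). Qed.
Lemma tN_prod (X Y : gset gT) (f : gmap X Y) (I : Type) (r : seq I) (P : pred I) F :
  @tN _ S _ _ f (\prod_(i <- r | P i) F i) = \prod_(i <- r | P i) @tN _ S _ _ f (F i).
Proof. by apply: (big_morph _ (@tN_mul _ S _ _ f) (@tN_one _ S _ _ f)). Qed.

Definition void_map (X : gset gT) (H : X -> False) : gmap X (gempty gT).
Proof. by refine (@GMap gT X (gempty gT) (fun x => match H x with end) _). Defined.

Lemma tS_empty (X : gset gT) : (X -> False) -> forall u : tS S X, u = 0.
Proof.
move=> H u.
have E : (1 : tS S X) = 0.
  by rewrite -(@tR_one _ S _ _ (void_map H)) t_empty tR0.
by rewrite -[u]mulr1 E mulr0.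
Qed.

Lemma tTR_id (X : gset gT) (s : tS S X) :
  @tT _ S _ _ (pb2 (gid X) (gid X)) (@tR _ S _ _ (pb1 (gid X) (gid X)) s) = s.
Proof. by rewrite -tT_pb tR_id tT_id. Qed.
Lemma tNR_id (X : gset gT) (s : tS S X) :
  @tN _ S _ _ (pb2 (gid X) (gid X)) (@tR _ S _ _ (pb1 (gid X) (gid X)) s) = s.
Proof. by rewrite -tN_pb tR_id tN_id. Qed.

Lemma tRT_inj (X Z : gset gT) (j : gmap X Z) : injective j ->
  forall s, @tR _ S _ _ j (@tT _ S _ _ j s) = s.
Proof.
move=> Hj s; rewrite tT_pb.
have E := @pb_same gT X X Z X j j (gid X) (gid X) (fun x y => inj_eq Hj x y).
have := congr1 (fun E => @tT _ S _ _ (projT2 E).2 (@tR _ S _ _ (projT2 E).1 s)) E.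
by rewrite /= tTR_id.
Qed.
Lemma tRN_inj (X Z : gset gT) (j : gmap X Z) : injective j ->
  forall s, @tR _ S _ _ j (@tN _ S _ _ j s) = s.
Proof.
move=> Hj s; rewrite tN_pb.
have E := @pb_same gT X X Z X j j (gid X) (gid X) (fun x y => inj_eq Hj x y).
have := congr1 (fun E => @tN _ S _ _ (projT2 E).2 (@tR _ S _ _ (projT2 E).1 s)) E.
by rewrite /= tNR_id.
Qed.

Lemma tRT_disj (X Y Z : gset gT) (j : gmap X Z) (k : gmap Y Z) :
  (forall x y, j x <> k y) -> forall s, @tR _ S _ _ k (@tT _ S _ _ j s) = 0.
Proof.
move=> D s; rewrite tT_pb.
rewrite (@tS_empty (gpb j k) _ (@tR _ S _ _ _ s)) ?tT0 //.
by case=> [[x y]] /= /eqP E; apply: (D x y).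
Qed.
Lemma tRN_disj (X Y Z : gset gT) (j : gmap X Z) (k : gmap Y Z) :
  (forall x y, j x <> k y) -> forall s, @tR _ S _ _ k (@tN _ S _ _ j s) = 1.
Proof.
move=> D s; rewrite tN_pb.
have He : gpb j k -> False by case=> [[x y]] /= /eqP E; apply: (D x y).
rewrite (@tS_empty (gpb j k) He (@tR _ S _ _ _ s)) -(@tS_empty _ He 1).
by rewrite tN_one.
Qed.

Section Sums.
Variable X : gset gT.
Definition piece := {O : gset gT & gmap O X}.

Fixpoint gsums (cs : seq piece) : gset gT :=
  match cs with [::] => gempty gT | c :: cs' => gsum (projT1 c) (gsums cs') end.

Fixpoint sumf (cs : seq piece) : gsums cs -> X :=
  match cs return gsums cs -> X with
  | [::] => fun v => match v with end
  | c :: cs' => fun v => match v with inl o => projT2 c o | inr w => sumf w end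
  end.

Lemma sumfE cs g (v : gsums cs) : sumf (gsact g v) = gsact g (sumf v).
Proof.
elim: cs v => [|c cs IH] /=; first by case.
by case=> [o|w] /=; rewrite ?gfunE ?IH.
Qed.

Definition sumg cs : gmap (gsums cs) X := GMap (@sumfE cs).

Fixpoint allz (cs : seq piece) : tS S (gsums cs) -> Prop :=
  match cs return tS S (gsums cs) -> Prop with
  | [::] => fun _ => True
  | c :: cs' => fun u => @tR _ S _ _ (ginl (projT1 c) (gsums cs')) u = 0 /\
                         allz (@tR _ S _ _ (ginr (projT1 c) (gsums cs')) u)
  end.

Lemma allz0 (cs : seq piece) (u : tS S (gsums cs)) : allz u -> u = 0.
Proof.
elim: cs u => [|c cs IH] u /=.
  by move=> _; apply: tS_empty; case.
case=> H1 /IH H2.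
have [f fK _] := t_sum S (projT1 c) (gsums cs).
rewrite -[u]fK -[0 in RHS](fK 0) /=.
by rewrite !tR0 H1 H2.
Qed.

Lemma allz_of cs (u : tS S X) :
  (forall c, List.In c cs -> @tR _ S _ _ (projT2 c) u = 0) -> allz (@tR _ S _ _ (sumg cs) u).
Proof.
elim: cs => [|c cs IH] //= H; split.
  rewrite -tR_comp.
  have -> : gcomp (sumg (c :: cs)) (ginl (projT1 c) (gsums cs)) = projT2 c.
    by apply: gmap_ext.
  by apply: H; left.
rewrite -tR_comp.
have -> : gcomp (sumg (c :: cs)) (ginr (projT1 c) (gsums cs)) = sumg cs.
  by apply: gmap_ext.
by apply: IH => d Hd; apply: H; right.
Qed.

End Sums.

Section Decomp.
Variables (X : gset gT) (I : finType) (pc : I -> piece X).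
Hypothesis pinj : forall i, injective (projT2 (pc i)).
Hypothesis pdisj : forall i k (o : projT1 (pc i)) (o' : projT1 (pc k)),
    projT2 (pc i) o = projT2 (pc k) o' -> i = k.
Hypothesis pcov : forall x, exists i, exists o, projT2 (pc i) o = x.

Lemma sumf_idx (l : seq I) (v : gsums (map pc l)) :
  exists2 i, i \in l & exists o, sumf v = projT2 (pc i) o.
Proof.
elim: l v => [|i l IH] /=; first by case.
case=> [o|w]; first by exists i; rewrite ?mem_head //; exists o.
have [k kl [o Ho]] := IH w; exists k; first by rewrite inE kl orbT.
by exists o.
Qed.

Lemma sumf_inj (l : seq I) : uniq l -> injective (@sumf X (map pc l)).
Proof.
elim: l => [|i l IH] /=; first by move=> _ [].
case/andP=> il ul [o|w] [o'|w'] /= E.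
- by rewrite (pinj E).
- have [k kl [o2 Ho2]] := sumf_idx w'.
  move: E; rewrite Ho2 => /pdisj ik; by rewrite ik kl in il.
- have [k kl [o2 Ho2]] := sumf_idx w.
  move: E; rewrite Ho2 => /esym /pdisj ik; by rewrite ik kl in il.
- by rewrite (IH ul _ _ E).
Qed.

Lemma sumf_surj (l : seq I) x : (exists i, i \in l /\ exists o, projT2 (pc i) o = x) ->
  exists v : gsums (map pc l), sumf v == x.
Proof.
elim: l => [|i l IH] /=; first by case=> ? [].
case=> k [kl [o Ho]].
case: (eqVneq k i) => [ki|ki].
  subst k; exists (inl o); by rewrite /= Ho.
have [w Hw] : exists w : gsums (map pc l), sumf w == x.
  apply: IH; exists k; split => //; first by move: kl; rewrite inE (negPf ki).
  by exists o.
by exists (inr w).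
Qed.

Definition cs0 := map pc (enum I).

Lemma sumf_onto x : exists v : gsums cs0, sumf v == x.
Proof.
apply: sumf_surj; have [i [o Ho]] := pcov x; exists i; split; last by exists o.
by rewrite mem_enum.
Qed.

Definition sinv (x : X) : gsums cs0 := xchoose (sumf_onto x).
Lemma sinvK x : sumf (sinv x) = x.
Proof. exact/eqP/(xchooseP (sumf_onto x)). Qed.
Lemma sinvE g x : sinv (gsact g x) = gsact g (sinv x).
Proof.
apply: (sumf_inj (enum_uniq I)).
by rewrite sumfE !sinvK.
Qed.
Definition sinvg : gmap X (gsums cs0) := GMap sinvE.

Lemma joint_inj (u v : tS S X) :
  (forall i, @tR _ S _ _ (projT2 (pc i)) u = @tR _ S _ _ (projT2 (pc i)) v) -> u = v.
Proof.
move=> H; apply/eqP; rewrite -subr_eq0; apply/eqP.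
have Hz : allz (@tR _ S _ _ (sumg cs0) (u - v)).
  apply: allz_of => c /List.in_map_iff [i [<- _]].
  by rewrite tRB H subrr.
have /allz0 E := Hz.
have -> : u - v = @tR _ S _ _ (gcomp (sumg cs0) sinvg) (u - v).
  have -> : gcomp (sumg cs0) sinvg = gid X by apply: gmap_ext => x /=; rewrite sinvK.
  by rewrite tR_id.
by rewrite tR_comp E tR0.
Qed.

Lemma decompT (s : tS S X) :
  s = \sum_i @tT _ S _ _ (projT2 (pc i)) (@tR _ S _ _ (projT2 (pc i)) s).
Proof.
apply: joint_inj => i; rewrite tR_sum (bigD1 i) //= tRT_inj // big1 ?addr0 //.
move=> k ki; apply: tRT_disj => o o' /pdisj E; by rewrite E eqxx in ki.
Qed.

Lemma decompN (s : tS S X) :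
  s = \prod_i @tN _ S _ _ (projT2 (pc i)) (@tR _ S _ _ (projT2 (pc i)) s).
Proof.
apply: joint_inj => i; rewrite tR_prod (bigD1 i) //= tRN_inj // big1 ?mulr1 //.
move=> k ki; apply: tRN_disj => o o' /pdisj E; by rewrite E eqxx in ki.
Qed.

Lemma decompT_along (Y : gset gT) (f : gmap X Y) (s : tS S X) :
  @tT _ S _ _ f s = \sum_i @tT _ S _ _ (gcomp f (projT2 (pc i))) (@tR _ S _ _ (projT2 (pc i)) s).
Proof.
rewrite {1}(decompT s) tT_sum; apply: eq_bigr => i _; by rewrite tT_comp.
Qed.

Lemma decompN_along (Y : gset gT) (f : gmap X Y) (s : tS S X) :
  @tN _ S _ _ f s = \prod_i @tN _ S _ _ (gcomp f (projT2 (pc i))) (@tR _ S _ _ (projT2 (pc i)) s).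
Proof.
rewrite {1}(decompN s) tN_prod; apply: eq_bigr => i _; by rewrite tN_comp.
Qed.

End Decomp.
End Tam.

Section All.
Variables (gT : finGroupType) (t z : gT) (p : nat).
Local Open Scope group_scope.
Hypotheses (pP : prime p) (pO : odd p) (t2 : t ^+ 2 = 1) (zp : z ^+ p = 1)
  (tz2 : (t * z) ^+ 2 = 1) (gen : <<[set t; z]>> = [set: gT]) (card : #|gT| = (2 * p)%N).
Local Notation H := <[t]>%G.
Local Notation Q := (gquot H).
Local Notation E := (gquot 1%G).
Local Notation P := (gquot [set: gT]%G).

Definition tb (e : bool) : gT := if e then t else 1.

Lemma t_sq : t * t = 1. Proof. by rewrite -t2 expgS expg1. Qed.
Lemma tV : t^-1 = t. Proof. by rewrite -[t^-1]mulg1 -t_sq mulKg. Qed.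
Lemma tzV : t * z = z^-1 * t.
Proof.
have E : (t * z) * (t * z) = 1 by rewrite -tz2 expgS expg1.
have H : (t * z)^-1 = t * z by apply/eqP; rewrite eq_invg_mul E.
by rewrite -{1}H invMg tV.
Qed.
Lemma p_gt1 : (1 < p)%N. Proof. exact: prime_gt1. Qed.
Lemma zV : z^-1 = z ^+ p.-1.
Proof.
apply: (@mulgI _ z); rewrite mulgV -expgS prednK ?zp //.
by apply: ltnW; apply: p_gt1.
Qed.
Lemma tzk k : t * z ^+ k = z ^+ (k * p.-1) * t.
Proof.
elim: k => [|k IH]; first by rewrite !expg0 mulg1 mul1g.
by rewrite expgSr mulgA IH -mulgA tzV zV mulgA -expgD mulSn addnC.
Qed.
Lemma zinv k : (z ^+ k)^-1 = z ^+ (k * p.-1).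
Proof. by rewrite -expgVn zV -expgM mulnC. Qed.
Lemma tzk' k : t * (z ^+ k)^-1 = z ^+ k * t.
Proof.
have h1 : t * z ^+ k * t = (z ^+ k)^-1 by rewrite tzk zinv -mulgA t_sq mulg1.
by rewrite -h1 !mulgA t_sq mul1g.
Qed.
Lemma zmod k : z ^+ (k %% p) = z ^+ k. Proof. exact: expg_mod. Qed.

Lemma prod_nf (m m' : nat) e e' :
  z ^+ m * tb e * (z ^+ m' * tb e') = z ^+ (m + m' * (if e then p.-1 else 1%N))%N * tb (e (+) e').
Proof.
case: e; case: e' => /=; rewrite ?mulg1 ?muln1.
- by rewrite !mulgA -(mulgA _ t (z ^+ m')) tzk !mulgA -expgD -mulgA t_sq mulg1.
- by rewrite -mulgA tzk mulgA -expgD.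
- by rewrite mulgA -expgD.
- by rewrite -expgD.
Qed.

Definition nfset := [set g : gT | [exists m : 'I_p, exists e : bool, g == z ^+ m * tb e]].

Lemma nfset_group : group_set nfset.
Proof.
apply/group_setP; split.
  rewrite inE; apply/existsP; exists (Ordinal (prime_gt0 pP)); apply/existsP; exists false.
  by rewrite /= mulg1.
move=> x y; rewrite !inE => /existsP[m /existsP[e /eqP->]] /existsP[m' /existsP[e' /eqP->]].
have ltm : (forall n, n %% p < p)%N by move=> n; rewrite ltn_mod prime_gt0.
apply/existsP; exists (Ordinal (ltm (m + m' * (if e then p.-1 else 1%N))%N%N)).
apply/existsP; exists (e (+) e'); apply/eqP; by rewrite prod_nf /= zmod.
Qed.

Lemma nf_all g : g \in nfset.
Proof.
have sub : [set: gT] \subset nfset.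
  rewrite -gen (@gen_subG _ _ (Group nfset_group)) subUset !sub1set !inE.
  apply/andP; split.
    apply/existsP; exists (Ordinal (prime_gt0 pP)); apply/existsP; exists true.
    by rewrite /= mul1g.
  have l1 : (1 < p)%N := p_gt1.
  apply/existsP; exists (Ordinal l1); apply/existsP; exists false.
  by rewrite /= mulg1 expg1.
by apply: (subsetP sub); rewrite inE.
Qed.

Lemma nf_ex g : exists m : 'I_p, exists e, g = z ^+ m * tb e.
Proof.
have := nf_all g; rewrite inE => /existsP[m /existsP[e /eqP->]]; by exists m, e.
Qed.

Definition nfF (me : 'I_p * bool) : gT := z ^+ me.1 * tb me.2.

Lemma nfF_inj : injective nfF.
Proof.
have sub : forall g, g \in image nfF predT.
  by move=> g; have [m [e ->]] := nf_ex g; apply/imageP; exists (m, e).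
have Hc : #|image nfF predT| == #|{: ('I_p * bool)%type}|.
  have -> : #|image nfF predT| = #|gT| by apply: eq_card => g; rewrite sub.
  by rewrite card cardT -cardE card_prod card_ord card_bool mulnC.
move/image_injP: Hc => H x y; exact: H.
Qed.

Lemma nf_inj (m m' : 'I_p) e e' : z ^+ m * tb e = z ^+ m' * tb e' -> m = m' /\ e = e'.
Proof. by move=> E; have /= [-> ->] := nfF_inj (x1 := (m, e)) (x2 := (m', e')) E. Qed.

Lemma z_eq1 k : z ^+ k = 1 -> (p %| k)%N.
Proof.
move=> E.
have l0 : (0 < p)%N := prime_gt0 pP.
have lk : (k %% p < p)%N by rewrite ltn_mod.
have := @nf_inj (Ordinal lk) (Ordinal l0) false false; rewrite /= !mulg1 zmod E expg0.
by move=> /(_ erefl) [/(congr1 val) /= /eqP]; rewrite /dvdn.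
Qed.

Lemma z_neq_t k : z ^+ k <> t.
Proof.
move=> E.
have l0 : (0 < p)%N := prime_gt0 pP.
have lk : (k %% p < p)%N by rewrite ltn_mod.
have := @nf_inj (Ordinal lk) (Ordinal l0) false true; rewrite /= mulg1 zmod E expg0 mul1g.
by move=> /(_ erefl) [].
Qed.

Lemma memH x : (x \in <[t]>) = (x == 1) || (x == t).
Proof.
apply/cycleP/orP => [[i ->]|[/eqP->|/eqP->]]; last 2 first.
- by exists 0%N.
- by exists 1%N; rewrite expg1.
rewrite -(expg_mod _ t2); have : (i %% 2 < 2)%N by rewrite ltn_mod.
case: (i %% 2)%N => [|[|//]] _; by [left | right; rewrite expg1].
Qed.

Lemma t_neq1 : t != 1.
Proof. apply/eqP => E; apply: (@z_neq_t 0); by rewrite expg0 E. Qed.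

Lemma zinj (i k : nat) : (i < p)%N -> (k < p)%N -> z ^+ i = z ^+ k -> i = k.
Proof.
move=> ip kp E; have := @nf_inj (Ordinal ip) (Ordinal kp) false false.
by rewrite /= !mulg1 => /(_ E) [/(congr1 val)].
Qed.

Lemma zeq (i k : nat) : z ^+ i = z ^+ k -> i %% p = k %% p.
Proof.
rewrite -(zmod i) -(zmod k) => E.
apply: zinj => //; by rewrite ltn_mod prime_gt0.
Qed.


Lemma cos_subproof (K : {group gT}) x : x *: (K : {set gT}) \in lcosets K [set: gT].
Proof. by rewrite mem_lcosets mulGSid ?subsetT ?inE. Qed.

Definition cos (K : {group gT}) x : gquot K := exist _ (x *: (K : {set gT})) (cos_subproof K x).

Lemma cosP (K : {group gT}) (o : gquot K) : exists x, o = cos K x.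
Proof.
case: o => A HA; case/lcosetsP: (HA) => x _ E; exists x; apply: val_inj => /=.
exact: E.
Qed.

Lemma cos_eq (K : {group gT}) x y : (cos K x == cos K y) = (x^-1 * y \in K).
Proof.
apply/eqP/idP => [/(congr1 val) /= E|H].
  by rewrite -mem_lcoset E lcoset_refl.
apply: val_inj => /=; apply/lcoset_eqP; by rewrite mem_lcoset -groupV invMg invgK.
Qed.


Lemma cos_act (K : {group gT}) g x : gsact g (cos K x) = cos K (g * x).
Proof. by apply: val_inj; rewrite /= lcosetM. Qed.

Lemma oproj_cos (K H : {group gT}) (sKH : K \subset H) x : oproj sKH (cos K x) = cos H x.
Proof. by apply: val_inj; rewrite /= -mulgA mulSGid. Qed.

Lemma rmul_cos g x : rmul g (cos 1%G x) = cos 1%G (x * g).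
Proof. by apply: val_inj; rewrite /= !mulg1 mulg_set1. Qed.

Lemma mem_cos (K : {group gT}) x c : (c \in sval (cos K x)) = (x^-1 * c \in K).
Proof. by rewrite /= mem_lcoset. Qed.

Lemma cos1_eq x y : (cos 1%G x == cos 1%G y) = (x == y).
Proof. by rewrite cos_eq eq_mulVg1 -in_set1 -set1gE. Qed.

Lemma P_single (o o' : gquot [set: gT]%G) : o = o'.
Proof.
have [x ->] := cosP o; have [y ->] := cosP o'.
by apply/eqP; rewrite cos_eq inE.
Qed.


Definition A := gsum Q Q.
Definition nab_f (u : A) : Q := match u with inl x => x | inr x => x end.
Lemma nab_fE g u : nab_f (gsact g u) = gsact g (nab_f u). Proof. by case: u. Qed.
Definition nab : gmap A Q := GMap nab_fE.
Definition qm : gmap Q P := oproj (subsetT H).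
Definition Pi := gpi nab qm.
Definition Ev := gev nab qm.
Definition pt : P := cos _ 1.

Definition mkf (F : {set gT} -> bool) : {ffun Q -> option A} :=
  [ffun B : Q => Some (if F (sval B) then inl B else inr B)].

Lemma mkU_good F : pi_good nab qm (pt, mkf F).
Proof.
apply/forallP => B /=; case: eqP => [_|[]]; last exact: P_single.
by rewrite ffunE; case: (F _).
Qed.

Definition mkU F : Pi := exist _ (pt, mkf F) (mkU_good F).

Definition secv (u : Pi) (B : Q) : A :=
  match (sval u).2 B with Some a => a | None => inl B end.

Lemma secvP (u : Pi) B : (sval u).2 B = Some (secv u B) /\ nab (secv u B) = B.
Proof.
have := forallP (svalP u) B; case: eqP => [_|[]]; last exact: P_single.
rewrite /secv; by case: ((sval u).2 B) => // a /eqP.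
Qed.

Lemma ev_good (u : Pi) B :
  (sval (u, secv u B).1).2 (nab (u, secv u B).2) == Some (u, secv u B).2.
Proof. by have [E1 E2] := secvP u B; move: E2 => /= ->; rewrite E1. Qed.

Definition ev_of (u : Pi) (B : Q) : Ev := exist _ (u, secv u B) (ev_good u B).

Lemma secv_act g (u : Pi) B : secv (gsact g u) (gsact g B) = gsact g (secv u B).
Proof.
rewrite {1}/secv /= ffunE gsactVK.
by have [-> _] := secvP u B.
Qed.

Lemma ev_of_act g (u : Pi) B : ev_of (gsact g u) (gsact g B) = gsact g (ev_of u B).
Proof. by apply: val_inj; rewrite /= secv_act. Qed.

Lemma secv_mkU F B : secv (mkU F) B = if F (sval B) then inl B else inr B.
Proof. by rewrite /secv /= ffunE. Qed.

Lemma mkU_ext F F' : (forall B : Q, F (sval B) = F' (sval B)) -> mkU F = mkU F'.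
Proof.
move=> EF; apply: val_inj; rewrite /=; congr (_, _).
by apply/ffunP => B; rewrite !ffunE EF.
Qed.

Lemma mkU_act g F : gsact g (mkU F) = mkU (fun B => F (g^-1 *: B)).
Proof.
apply: val_inj; rewrite /=; congr (_, _); first exact: P_single.
apply/ffunP => B; rewrite !ffunE /=.
by case: (F _) => /=; congr (Some (_ _)); exact: (gsactK (X:=Q)).
Qed.

Definition isl (a : A) := if a is inl _ then true else false.

Lemma mkU_eta (u : Pi) F : (forall B : Q, F (sval B) = isl (secv u B)) -> u = mkU F.
Proof.
move=> EF; apply: val_inj; case: u EF => [[y s] Hs] EF /=; congr (_, _).
  exact: P_single.
apply/ffunP => B; rewrite ffunE EF.
have [E1 E2] := secvP (exist _ (y, s) Hs) B.
move: E1 E2; rewrite /= => ->; case: (secv _ B) => a /= <-; done.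
Qed.

Definition Jf (K : {group gT}) (f : {ffun gT -> bool}) (o : gquot K) : Pi :=
  mkU (fun B => [exists c in sval o, exists w in B, f (w^-1 * c)]).

Lemma JfE (K : {group gT}) f g (o : gquot K) : Jf f (gsact g o) = gsact g (Jf f o).
Proof.
rewrite /Jf mkU_act; apply: mkU_ext => B /=.
apply/existsP/existsP => [[c /andP[Hc /existsP[w /andP[Hw Hf]]]]|[c /andP[Hc /existsP[w /andP[Hw Hf]]]]].
  exists (g^-1 * c); rewrite -mem_lcoset Hc /=; apply/existsP; exists (g^-1 * w).
  by rewrite mem_lcoset invgK mulKVg Hw /= invMg invgK -mulgA mulKVg.
exists (g * c); rewrite mem_lcoset mulKg Hc /=; apply/existsP; exists (g * w).
rewrite mem_lcoset invgK in Hw; by rewrite Hw /= invMg -mulgA mulKg.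
Qed.

Definition Jg (K : {group gT}) f : gmap (gquot K) Pi := GMap (@JfE K f).


Implicit Types (g h x c w : gT) (f : {ffun gT -> bool}).
Definition fa : {ffun gT -> bool} := [ffun=> true].
Definition fb : {ffun gT -> bool} := [ffun=> false].

Lemma coactM g h f : coact g (coact h f) = coact (g * h) f.
Proof. by apply/ffunP => x; rewrite !ffunE mulgA. Qed.
Lemma coact1 f : coact 1 f = f.
Proof. by apply/ffunP => x; rewrite !ffunE mulg1. Qed.
Lemma coactK g f : coact g^-1 (coact g f) = f.
Proof. by rewrite coactM mulVg coact1. Qed.
Lemma coact_pow g f : coact g f = f -> forall n, coact (g ^+ n) f = f.
Proof. move=> E; elim=> [|n IH]; first by rewrite coact1. by rewrite expgS -coactM IH E. Qed.
Lemma coact_const g (b : bool) : coact g [ffun=> b] = [ffun=> b].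
Proof. by apply/ffunP => x; rewrite !ffunE. Qed.

Lemma coindP f : f \in coind t -> forall x, f (t * x) = f x.
Proof. by rewrite inE => /forallP H x; apply/eqP. Qed.
Lemma coind_act g f : f \in coind t -> coact g f \in coind t.
Proof. move=> Hf; rewrite inE; apply/forallP => x; by rewrite !ffunE -mulgA coindP. Qed.
Lemma coindH f : f \in coind t -> forall h x, h \in H -> f (h * x) = f x.
Proof. by move=> Hf h x; rewrite memH => /orP[/eqP->|/eqP->]; rewrite ?mul1g ?coindP. Qed.

Lemma fix_t f : coact t f = f -> forall x, f (x * t) = f x.
Proof. by move=> E x; rewrite -[in RHS]E ffunE. Qed.

Definition uo f := mkU (fun B => [exists w in B, f w^-1]).

Lemma uo_bit f x : f \in coind t -> [exists w in sval (cos H x), f w^-1] = f x^-1.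
Proof.
move=> Hf; apply/existsP/idP => [[w /andP[Hw Hfw]]|Hx].
  rewrite mem_cos in Hw; have := @coindH f Hf _ x^-1 (groupVr Hw).
  by rewrite invMg invgK mulgK => <-.
exists x; rewrite Hx andbT mem_cos mulVg; exact: group1.
Qed.

Lemma uo_inj f f' : f \in coind t -> f' \in coind t -> uo f = uo f' -> f = f'.
Proof.
move=> Hf Hf' E; apply/ffunP => x.
have := congr1 (fun u => isl (secv u (cos H x^-1))) E.
rewrite /uo !secv_mkU !uo_bit // invgK.
by case: (f x); case: (f' x).
Qed.

Lemma cos_repr (B : Q) w : w \in sval B -> B = cos H w.
Proof.
have [x ->] := cosP B; rewrite mem_cos => Hw; apply/eqP; rewrite cos_eq.
done.
Qed.

Lemma uo_surj (u : Pi) : exists2 f, f \in coind t & u = uo f.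
Proof.
pose f := [ffun x => isl (secv u (cos H x^-1))].
have Hf : f \in coind t.
  rewrite inE; apply/forallP => x; rewrite !ffunE invMg.
  have -> : cos H (x^-1 * t^-1) = cos H x^-1.
    by apply/eqP; rewrite cos_eq invMg !invgK -mulgA mulgV mulg1 cycle_id.
  done.
exists f => //; apply: mkU_eta => B.
have [x ->] := cosP B; rewrite uo_bit // ffunE invgK //.
Qed.

Lemma Jf_uo (K : {group gT}) f c : (forall k, k \in K -> coact k f = f) ->
  Jf f (cos K c) = uo (coact c f).
Proof.
move=> HK; apply: mkU_ext => B.
apply/existsP/existsP => [[c' /andP[Hc /existsP[w /andP[Hw Hfw]]]]|[w /andP[Hw Hfw]]].
  exists w; rewrite Hw /= ffunE; rewrite mem_cos in Hc.
  by rewrite -(HK _ Hc) ffunE -mulgA mulKVg.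
exists c; rewrite mem_cos mulVg group1 /=; apply/existsP; exists w.
by rewrite Hw -[f _](ffunE (fun x => f (x * c))).
Qed.


Implicit Types (r : {ffun gT -> bool}).
Lemma const_of f : (forall x, f x = f 1) -> f = fa \/ f = fb.
Proof.
move=> Hf; case E: (f 1); [left|right]; apply/ffunP => x; by rewrite !ffunE Hf E.
Qed.

Lemma St1 f k : f \in coind t -> coact (z ^+ k) f = f -> ~~ (p %| k)%N -> f = fa \/ f = fb.
Proof.
move=> Hf Hk Hpk.
have k0 : (0 < k)%N by case: k Hk Hpk => //; rewrite dvdn0.
have Hz : coact z f = f.
  case: (egcdnP p k0) => u v Huv _.
  have g1 : gcdn k p = 1%N by apply/eqP; rewrite -/(coprime k p) coprime_sym prime_coprime.
  have := coact_pow Hk u; rewrite -expgM mulnC Huv g1 addn1 expgS mulnC expgM zp expg1n.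
  by rewrite mulg1.
have Hm : forall m, coact (z ^+ m) f = f by move=> m; rewrite coact_pow.
have Hz1 : forall m, f (z ^+ m) = f 1.
  by move=> m; rewrite -[in RHS](Hm m) ffunE mul1g.
apply: const_of => x.
have [m [e ->]] := nf_ex x; case: e => /=; last by rewrite mulg1 Hz1.
by rewrite -tzk' coindP // zinv Hz1.
Qed.

Lemma fa_neq_fb : fa != fb.
Proof. by apply/eqP => /ffunP /(_ 1); rewrite !ffunE. Qed.

Lemma notconst_act f g : f != fa -> f != fb -> coact g f != fa /\ coact g f != fb.
Proof.
move=> Ha Hb; split; apply/eqP => E.
  by move/eqP: Ha; apply; rewrite -(coactK g f) E coact_const.
by move/eqP: Hb; apply; rewrite -(coactK g f) E coact_const.
Qed.

Lemma Xfix_coind r : r \in Xfix t -> r \in coind t.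
Proof. by rewrite inE => /andP[]. Qed.
Lemma Xfix_t r : r \in Xfix t -> coact t r = r.
Proof. by rewrite inE => /and4P[_ /eqP]. Qed.
Lemma Xfix_nc r : r \in Xfix t -> r != fa /\ r != fb.
Proof. by rewrite inE => /and4P[]. Qed.

Lemma St2 r g : r \in Xfix t -> coact g r = r -> g = 1 \/ g = t.
Proof.
move=> Hx Hg; have [m [e Eg]] := nf_ex g; subst g.
have Hm : coact (z ^+ m) r = r.
  move: Hg; case: e => /= Hg; last by move: Hg; rewrite mulg1.
  by move: Hg; rewrite -coactM Xfix_t.
case: (posnP m) => [m0|mpos].
  by rewrite m0 expg0 mul1g; case: e Hg => _; [right|left].
have Hpm : ~~ (p %| m)%N.
  by rewrite /dvdn modn_small ?ltn_ord // -lt0n.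
have [E1|E1] := St1 (Xfix_coind Hx) Hm Hpm; have := Xfix_nc Hx; by rewrite E1 eqxx => -[].
Qed.

Lemma p_dvd_double m : (p %| m + m)%N -> (p %| m)%N.
Proof.
rewrite addnn -mul2n Euclid_dvdM // => /orP[H2|//].
have p2 : p = 2%N.
  apply/eqP; rewrite eqn_leq (dvdn_leq _ H2) //=; exact: prime_gt1.
by move: pO; rewrite p2.
Qed.

Lemma dvd_lt_0 m : (m < p)%N -> (p %| m)%N -> m = 0%N.
Proof.
move=> mp; case: (posnP m) => // mpos /(dvdn_leq mpos) pm.
by move: (leq_ltn_trans pm mp); rewrite ltnn.
Qed.

Lemma zz_eq1 m : (z ^+ m)^-1 * (z ^+ m)^-1 = 1 -> (p %| m)%N.
Proof.
move=> E4; apply: p_dvd_double; apply: z_eq1.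
by rewrite expgD; apply/eqP; rewrite -invg_eq1 invMg E4.
Qed.

Lemma St3 r r' h : r \in Xfix t -> r' \in Xfix t -> coact h r = r' -> r = r'.
Proof.
move=> Hr Hr' Eh; have [m [e Eg]] := nf_ex h; subst h.
have E1 : r' = coact (z ^+ m) r.
  rewrite -Eh; case: e {Eh} => /=; by rewrite ?mulg1 // -coactM Xfix_t.
have Hc : coact ((z ^+ m)^-1 * t * z ^+ m) r = r.
  by rewrite -!coactM -E1 Xfix_t // E1 coactK.
have [E2|E2] := St2 Hr Hc.
  move: E2 => /(congr1 (mulg (z ^+ m))); rewrite mulg1 !mulgA mulgV mul1g => E3.
  have E4 : t = 1 by apply: (mulIg (z ^+ m)); rewrite mul1g.
  by move: t_neq1; rewrite E4 eqxx.
move: E2; rewrite -mulgA tzk -zinv mulgA -{2}[t]mul1g => /mulIg /zz_eq1 pm.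
by rewrite E1 (dvd_lt_0 (ltn_ord m) pm) expg0 coact1.
Qed.

Lemma cofree_act f h : cofree f -> cofree (coact h f).
Proof.
move=> /forallP Hf; apply/forallP => g; apply/implyP => /eqP Hg.
have E : h^-1 * g * h = 1.
  apply/eqP; apply: (implyP (Hf _)); apply/eqP; by rewrite -!coactM Hg coactK.
have Eg : g = h * (h^-1 * g * h) * h^-1 by rewrite !mulgA mulgV mul1g mulgK.
by rewrite Eg E mulg1 mulgV.
Qed.

Lemma not_cofree_t f : coact t f = f -> ~~ cofree f.
Proof.
move=> E; apply/forallP => /(_ t) /implyP; rewrite E eqxx => /(_ isT) /eqP Et.
by move: t_neq1; rewrite Et eqxx.
Qed.

Lemma St4 f : f \in coind t -> ~~ cofree f -> f != fa -> f != fb ->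
  exists c, coact c f \in Xfix t.
Proof.
move=> Hf /forallPn [g]; rewrite negb_imply => /andP[/eqP Hg Hg1] Ha Hb.
have [m [e Eg]] := nf_ex g; subst g.
case: e Hg Hg1 => /= Hg Hg1; last first.
  move: Hg Hg1; rewrite mulg1 => Hg Hg1.
  have Hpm : ~~ (p %| m)%N.
    apply/negP => /(dvd_lt_0 (ltn_ord m)) m0; by move: Hg1; rewrite m0 expg0 eqxx.
  have [E1|E1] := St1 Hf Hg Hpm; by [rewrite E1 eqxx in Ha | rewrite E1 eqxx in Hb].
pose c := z ^+ (m * p./2).
exists c.
have Hfix : coact t (coact c f) = coact c f.
  have Etc : t * c = c * (z ^+ m * t).
    rewrite /c tzk -zinv mulgA; congr (_ * _); apply: (@mulgI _ (z ^+ (m * p./2))).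
    rewrite mulgV mulgA -!expgD.
    have Hh : forall k : nat, (k * p./2 + k * p./2 + k = k * p)%N.
      move=> k; rewrite -mulnDr -{2}[k]muln1 -mulnDr; congr (k * _)%N.
      have := odd_double_half p; rewrite pO -addnn /= => E; rewrite -[in RHS]E; by rewrite addnC.
    rewrite Hh.
    by rewrite mulnC expgM zp expg1n.
  by rewrite coactM Etc -coactM Hg.
have [Ha' Hb'] := notconst_act c Ha Hb.
rewrite inE coind_act //= Hfix eqxx /=.
by move: Ha' Hb'; rewrite /fa /fb => -> ->.
Qed.

Lemma cos_tb x e : cos H (x * tb e) = cos H x.
Proof.
apply/eqP; rewrite cos_eq invMg -mulgA mulVg mulg1 groupV.
by case: e => /=; rewrite ?cycle_id ?group1.
Qed.

Lemma z_eq_mod a b : (z ^+ a == z ^+ b) = (a %% p == b %% p)%N.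
Proof.
apply/eqP/eqP => [/zeq //|E]; by rewrite -zmod E zmod.
Qed.

Lemma cosHz g a b : (cos H (g * z ^+ a) == cos H (g * z ^+ b)) = (a %% p == b %% p)%N.
Proof.
rewrite cos_eq invMg -mulgA mulKg memH -eq_mulVg1 z_eq_mod.
case: (a %% p == b %% p)%N => //=.
apply/eqP; rewrite zinv -expgD; exact: z_neq_t.
Qed.

Lemma cosHzV g a : cos H (g * (z ^+ a)^-1) = cos H (g * z ^+ (a * p.-1)).
Proof. by rewrite zinv. Qed.

Lemma bitJ (K : {group gT}) f c0 w0 (v : bool) :
  (forall c w, c \in sval (cos K c0) -> w \in sval (cos H w0) -> f (w^-1 * c) = v) ->
  secv (Jf f (cos K c0)) (cos H w0) = if v then inl (cos H w0) else inr (cos H w0).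
Proof.
move=> Hv; rewrite secv_mkU.
have -> : [exists c in sval (cos K c0), exists w in sval (cos H w0), f (w^-1 * c)] = v.
  apply/existsP/idP => [[c /andP[Hc /existsP[w /andP[Hw]]]]|Hv'].
    by rewrite Hv.
  exists c0; rewrite mem_cos mulVg group1 /=; apply/existsP; exists w0.
  by rewrite mem_cos mulVg group1 /= Hv // mem_cos mulVg group1.
done.
Qed.

Lemma mem_cos1 g c : (c \in sval (cos 1%G g)) = (c == g).
Proof. by rewrite mem_cos eq_sym eq_mulVg1 -in_set1 -set1gE. Qed.

Lemma cosHzV_eq g a b : cos H (g * (z ^+ a)^-1) = cos H (g * (z ^+ b)^-1) -> (a %% p = b %% p)%N.
Proof.
rewrite !zinv => /eqP; rewrite cosHz => /eqP /(congr1 (fun n => z ^+ n)).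
rewrite !zmod -!zinv => /invg_inj; exact: zeq.
Qed.

Lemma cos_nf g x : exists m : 'I_p, cos H x = cos H (g * z ^+ m).
Proof.
have [m [e E]] := nf_ex (g^-1 * x); exists m.
by rewrite -(mulKVg g x) E mulgA cos_tb.
Qed.

Lemma zinv_sub (m : nat) : (m <= p)%N -> (z ^+ ((p - m) %% p))^-1 = z ^+ m.
Proof.
move=> mp; apply/eqP; rewrite eq_invg_mul zmod -expgD subnK //; exact/eqP.
Qed.

Lemma cosH_cases g1 g2 : cos H g1 = cos H g2 -> g2 = g1 \/ g2 = g1 * t.
Proof.
move/eqP; rewrite cos_eq memH => /orP[/eqP E|/eqP E]; [left|right].
  by rewrite -(mulKVg g1 g2) E mulg1.
by rewrite -(mulKVg g1 g2) E.
Qed.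

Lemma cosH_zz g a b : cos H (g * z ^+ a) = cos H (g * z ^+ b) -> z ^+ a = z ^+ b.
Proof. by move/eqP; rewrite cosHz => /eqP E; rewrite -zmod E zmod. Qed.

Lemma cosH_zVz g a b : cos H (g * (z ^+ a)^-1) = cos H (g * z ^+ b) -> (z ^+ a)^-1 = z ^+ b.
Proof. by rewrite zinv => /cosH_zz ->. Qed.

Lemma cosH_zVzV g a b : cos H (g * (z ^+ a)^-1) = cos H (g * (z ^+ b)^-1) -> z ^+ a = z ^+ b.
Proof. by rewrite !zinv => /cosH_zz; rewrite -!zinv => /invg_inj. Qed.

Lemma cos_t_zV g a : cos H (g * t * (z ^+ a)^-1) = cos H (g * z ^+ a).
Proof. by rewrite -mulgA tzk' mulgA -[g * _ * t]/(g * z ^+ a * tb true) cos_tb. Qed.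

Lemma inv_self i : (z ^+ i)^-1 = z ^+ i -> (p %| i)%N.
Proof. by move=> E; apply: zz_eq1; rewrite {1}E mulgV. Qed.

Lemma zinv_sub' (m : nat) : (m <= p)%N -> (z ^+ (p - m))^-1 = z ^+ m.
Proof. move=> mp; apply/eqP; rewrite eq_invg_mul -expgD subnK //; exact/eqP. Qed.

Lemma half_lt : (p./2 < p)%N.
Proof. by rewrite ltn_half_double -addnn -{1}[p]addn0 ltn_add2l prime_gt0. Qed.

Lemma hh : (p./2 + p./2).+1 = p.
Proof. by have := odd_double_half p; rewrite pO -addnn add1n. Qed.

Lemma small_sum i k : (0 < i)%N -> (0 < k)%N -> (i <= p./2)%N -> (k <= p./2)%N -> ~~ (p %| i + k)%N.
Proof.
move=> i0 k0 ih kh; apply/negP => /dvdn_leq; rewrite addn_gt0 i0 => /(_ isT).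
rewrite -{1}hh => H1; have := leq_trans H1 (leq_add ih kh); by rewrite ltnn.
Qed.

Lemma cos_zV_1 g k : cos H g = cos H (g * (z ^+ k)^-1) -> (p %| k)%N.
Proof.
rewrite -{1}(mulg1 g) -(expg0 z) => /esym /cosH_zVz /eqP; rewrite expg0 invg_eq1 => /eqP.
exact: z_eq1.
Qed.

Section Reps.
Variable Y : {set {ffun gT -> bool}}.
Hypothesis hY : free_transversal t Y.

Lemma Y_sub y : y \in Y -> y \in coind t /\ cofree y.
Proof. by case: hY => /subsetP H _ /H; rewrite inE => /andP[]. Qed.

Lemma coorbitP f y : reflect (exists g, f = coact g y) (f \in coorbit y).
Proof. apply: (iffP imsetP) => [[g _ ->]|[g ->]]; by exists g. Qed.

Lemma Y_uniq f y y' : f \in coind t -> cofree f -> y \in Y -> y' \in Y ->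
  f \in coorbit y -> f \in coorbit y' -> y = y'.
Proof.
move=> Hf Hfr Hy Hy' Hoy Hoy'; case: hY => _ /(_ f Hf Hfr) /eqP /cards1P [y0 E].
have : y \in [set y in Y | f \in coorbit y] by rewrite inE Hy Hoy.
have : y' \in [set y in Y | f \in coorbit y] by rewrite inE Hy' Hoy'.
by rewrite E !inE => /eqP -> /eqP ->.
Qed.

Lemma Y_ex f : f \in coind t -> cofree f -> exists2 y, y \in Y & exists g, f = coact g y.
Proof.
move=> Hf Hfr; case: hY => _ /(_ f Hf Hfr) /eqP /cards1P [y0 E].
have : y0 \in [set y in Y | f \in coorbit y] by rewrite E set11.
by rewrite inE => /andP[Hy /coorbitP Ho]; exists y0.
Qed.

Lemma const_not_cofree (b : bool) : ~~ cofree ([ffun=> b] : {ffun gT -> bool}).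
Proof. by apply: not_cofree_t; rewrite coact_const. Qed.

Lemma Xfix_not_cofree r : r \in Xfix t -> ~~ cofree r.
Proof. by move/Xfix_t/not_cofree_t. Qed.

Definition rep r := [|| r \in Y, r \in Xfix t, r == fa | r == fb].

Lemma rep_orbit r r' h : rep r -> rep r' -> coact h r = r' -> r = r'.
Proof.
move=> Hr Hr'.
case/or4P: Hr => [Hy|Hx|/eqP->|/eqP->] E; last 2 first.
- by rewrite -E /fa coact_const.
- by rewrite -E /fb coact_const.
- have [Hyc Hyf] := Y_sub Hy.
  have Hf' : cofree r' by rewrite -E cofree_act.
  case/or4P: Hr' => [Hy'|Hx'|/eqP Ea|/eqP Eb].
  + apply: (Y_uniq (f := r')) => //; first by rewrite -E coind_act.
      by apply/coorbitP; exists h.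
    by apply/coorbitP; exists 1%g; rewrite coact1.
  + by move: Hf'; rewrite (negPf (Xfix_not_cofree Hx')).
  + by move: Hf'; rewrite Ea (negPf (const_not_cofree true)).
  + by move: Hf'; rewrite Eb (negPf (const_not_cofree false)).
- case/or4P: Hr' => [Hy'|Hx'|/eqP Ea|/eqP Eb].
  + have [_ Hf'] := Y_sub Hy'.
    have : cofree r by rewrite -(coactK h r) E cofree_act.
    by rewrite (negPf (Xfix_not_cofree Hx)).
  + exact: St3 Hx Hx' E.
  + have := Xfix_nc Hx; by rewrite -(coactK h r) E Ea /fa coact_const eqxx => -[].
  + have := Xfix_nc Hx; by rewrite -(coactK h r) E Eb /fb coact_const eqxx => -[].
Qed.

Definition emptyPi : gmap (gempty gT) Pi.
Proof. refine (@GMap gT (gempty gT) Pi (fun v => match v with end) _). by move=> g []. Defined.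

Definition pcPi f : {O : gset gT & gmap O Pi} :=
  if f \in Y then existT _ E (Jg 1%G f)
  else if f \in Xfix t then existT _ Q (Jg H f)
  else if (f == fa) || (f == fb) then existT _ P (Jg [set: gT]%G f)
  else existT _ (gempty gT) emptyPi.

Lemma pcPi_Y f : f \in Y -> pcPi f = existT _ E (Jg 1%G f).
Proof. by rewrite /pcPi => ->. Qed.
Lemma pcPi_X f : f \notin Y -> f \in Xfix t -> pcPi f = existT _ Q (Jg H f).
Proof. by rewrite /pcPi => /negPf -> ->. Qed.
Lemma pcPi_C f : f \notin Y -> f \notin Xfix t -> (f == fa) || (f == fb) ->
  pcPi f = existT _ P (Jg [set: gT]%G f).
Proof. by rewrite /pcPi => /negPf -> /negPf -> ->. Qed.
Lemma pcPi_0 f : ~~ rep f -> pcPi f = existT _ (gempty gT) emptyPi.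
Proof. by rewrite /pcPi /rep => /norP [/negPf -> /norP [/negPf -> /negPf ->]]. Qed.

Lemma const_notY (b : bool) : ([ffun=> b] : {ffun gT -> bool}) \notin Y.
Proof. by apply/negP => /Y_sub [_]; rewrite (negPf (const_not_cofree b)). Qed.
Lemma const_notX (b : bool) : ([ffun=> b] : {ffun gT -> bool}) \notin Xfix t.
Proof. by apply/negP => /Xfix_nc; case: b; rewrite /fa /fb eqxx => -[]. Qed.
Lemma X_notY r : r \in Xfix t -> r \notin Y.
Proof. by move=> Hx; apply/negP => /Y_sub [_]; rewrite (negPf (Xfix_not_cofree Hx)). Qed.

Lemma Jf_uo1 f g : Jf f (cos 1%G g) = uo (coact g f).
Proof.
apply: Jf_uo => k /set1gP ->; exact: coact1.
Qed.
Lemma Jf_uoH r c : r \in Xfix t -> Jf r (cos H c) = uo (coact c r).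
Proof.
move=> Hr; apply: Jf_uo => k; rewrite memH => /orP[/eqP->|/eqP->].
  exact: coact1.
exact: Xfix_t.
Qed.
Lemma Jf_uoT (b : bool) c : Jf ([ffun=> b] : {ffun gT -> bool}) (cos [set: gT]%G c) = uo [ffun=> b].
Proof. by rewrite Jf_uo ?coact_const // => k _; rewrite coact_const. Qed.

Lemma piece_uo f (o : projT1 (pcPi f)) :
  exists c, projT2 (pcPi f) o = uo (coact c f) /\ rep f /\ f \in coind t.
Proof.
move: o; case: (boolP (f \in Y)) => HY.
  rewrite pcPi_Y // => o /=; have [g ->] := cosP o; exists g; rewrite Jf_uo1.
  by split => //; rewrite /rep HY; case: (Y_sub HY).
case: (boolP (f \in Xfix t)) => HX.
  rewrite pcPi_X // => o /=; have [c ->] := cosP o; exists c; rewrite Jf_uoH //.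
  by split => //; rewrite /rep HX orbT; split => //; exact: Xfix_coind.
case: (boolP ((f == fa) || (f == fb))) => HC.
  rewrite pcPi_C // => o /=; have [c ->] := cosP o; exists c.
  case/orP: HC => /eqP ->; rewrite Jf_uoT coact_const /rep eqxx ?orbT; split => //;
    split => //; rewrite inE; apply/forallP => x; by rewrite !ffunE.
by rewrite pcPi_0 /rep ?(negPf HY) ?(negPf HX) //=; case.
Qed.

Lemma pcPi_inj f : injective (projT2 (pcPi f)).
Proof.
case: (boolP (f \in Y)) => HY.
  rewrite pcPi_Y // => o1 o2 /=; have [g1 ->] := cosP o1; have [g2 ->] := cosP o2.
  rewrite !Jf_uo1; have [Hc Hfr] := Y_sub HY.
  move/(uo_inj (coind_act _ Hc) (coind_act _ Hc)) => /(congr1 (coact g2^-1)).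
  rewrite coactK coactM => Eg; apply/eqP; rewrite cos1_eq.
  move/forallP: Hfr => /(_ (g2^-1 * g1)) /implyP; rewrite Eg eqxx => /(_ isT).
  by rewrite -eq_mulVg1 eq_sym.
case: (boolP (f \in Xfix t)) => HX.
  rewrite pcPi_X // => o1 o2 /=; have [g1 ->] := cosP o1; have [g2 ->] := cosP o2.
  have Hc := Xfix_coind HX.
  rewrite !Jf_uoH //; move/(uo_inj (coind_act _ Hc) (coind_act _ Hc)) => /(congr1 (coact g2^-1)).
  rewrite coactK coactM => /(St2 HX) Eg; apply/eqP; rewrite cos_eq -groupV invMg invgK memH.
  by case: Eg => ->; rewrite eqxx ?orbT.
case: (boolP ((f == fa) || (f == fb))) => HC.
  by rewrite pcPi_C // => o1 o2 _; exact: P_single.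
by rewrite pcPi_0 /rep ?(negPf HY) ?(negPf HX) //=; case.
Qed.

Lemma pcPi_disj f f' (o : projT1 (pcPi f)) (o' : projT1 (pcPi f')) :
  projT2 (pcPi f) o = projT2 (pcPi f') o' -> f = f'.
Proof.
have [c [-> [Hr Hc]]] := piece_uo o; have [c' [-> [Hr' Hc']]] := piece_uo o'.
move/(uo_inj (coind_act _ Hc) (coind_act _ Hc')) => /(congr1 (coact c'^-1)).
rewrite coactK coactM; exact: rep_orbit.
Qed.

Lemma pcPi_cov u : exists f, exists o : projT1 (pcPi f), projT2 (pcPi f) o = u.
Proof.
have [f Hf ->] := uo_surj u.
case: (boolP ((f == fa) || (f == fb))) => HC.
  exists f; have [HY HX] : f \notin Y /\ f \notin Xfix t.
    by case/orP: HC => /eqP ->; split; rewrite ?const_notY ?const_notX.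
  rewrite pcPi_C //; exists (cos [set: gT]%G 1%g) => /=.
  by case/orP: HC => /eqP ->; rewrite Jf_uoT.
have [Ha Hb] : f != fa /\ f != fb by move: HC; rewrite negb_or => /andP[].
case: (boolP (cofree f)) => Hfr.
  have [y Hy [g Eg]] := Y_ex Hf Hfr.
  exists y; rewrite pcPi_Y //; exists (cos 1%G g) => /=; by rewrite Jf_uo1 Eg.
have [c Hx] := St4 Hf Hfr Ha Hb.
exists (coact c f); rewrite pcPi_X ?X_notY //; exists (cos H c^-1) => /=.
by rewrite Jf_uoH // coactK.
Qed.

End Reps.

Variable S : tambara gT.
Local Open Scope ring_scope.
Local Notation RR := (@tR _ S _ _).
Local Notation TT := (@tT _ S _ _).
Local Notation NN := (@tN _ S _ _).
Local Notation evp := (ev_proj nab qm).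
Local Notation eve := (ev_eval nab qm).

Lemma ev_eta (e : Ev) : e = ev_of (evp e) (nab (eve e)).
Proof.
apply: val_inj; case: e => [[u a] Ha] /=; congr (_, _).
by rewrite /secv (eqP Ha).
Qed.

Section KP.
Variables (O : gset gT) (j : gmap O Pi).

Definition mkpb (o : O) (B : Q) : gpb evp j := exist _ (ev_of (j o) B, o) (eqxx _).

Lemma mkpb_inj o o' B B' : mkpb o B = mkpb o' B' -> o = o' /\ B = B'.
Proof.
move=> /(congr1 val) /= [_ E2 ->]; split => //.
have [_ h1] := secvP (j o) B; have [_ h2] := secvP (j o') B'.
by rewrite -h1 E2 h2.
Qed.

Lemma mkpb_eta (w : gpb evp j) : w = mkpb (pb2 evp j w) (nab (eve (pb1 evp j w))).
Proof.
apply: val_inj; case: w => [[e o] Hw] /=; congr (_, _).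
by rewrite {1}(ev_eta e) (eqP Hw).
Qed.

Lemma mkpb_act g o B : mkpb (gsact g o) (gsact g B) = gsact g (mkpb o B).
Proof. by apply: val_inj; rewrite /= gfunE ev_of_act. Qed.

Variables (O' : gset gT) (be : gmap O' Q) (ga : gmap O' O).
Lemma kpE g o' : mkpb (ga (gsact g o')) (be (gsact g o')) = gsact g (mkpb (ga o') (be o')).
Proof. by rewrite !gfunE mkpb_act. Qed.
Definition kp : gmap O' (gpb evp j) := GMap kpE.

Lemma kp_pb2 : gcomp (pb2 evp j) kp = ga.
Proof. by apply: gmap_ext. Qed.

Lemma kp_eval (v : bool) :
  (forall o', secv (j (ga o')) (be o') = if v then inl (be o') else inr (be o')) ->
  gcomp eve (gcomp (pb1 evp j) kp) = gcomp (if v then ginl Q Q else ginr Q Q) be.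
Proof. by move=> Hv; apply: gmap_ext => o' /=; rewrite Hv; case: v {Hv}. Qed.
End KP.

Definition pbdata (O : gset gT) := {O' : gset gT & (gmap O' Q * gmap O' O)%type}.
Definition pcpb (O : gset gT) (j : gmap O Pi) (d : pbdata O) :
  {O' : gset gT & gmap O' (gpb evp j)} :=
  existT _ (projT1 d) (kp j (projT2 d).1 (projT2 d).2).

Lemma piece_norm (s : tS S A) (a b : tS S Q) (Ha : RR (ginl Q Q) s = a)
  (Hb : RR (ginr Q Q) s = b) (O : gset gT) (j : gmap O Pi) (I : finType)
  (D : I -> pbdata O) (v : I -> bool) :
  (forall i (o1 o2 : projT1 (D i)), (projT2 (D i)).2 o1 = (projT2 (D i)).2 o2 ->
       (projT2 (D i)).1 o1 = (projT2 (D i)).1 o2 -> o1 = o2) ->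
  (forall i k (o1 : projT1 (D i)) (o2 : projT1 (D k)), (projT2 (D i)).2 o1 = (projT2 (D k)).2 o2 ->
       (projT2 (D i)).1 o1 = (projT2 (D k)).1 o2 -> i = k) ->
  (forall o B, exists i, exists o' : projT1 (D i), (projT2 (D i)).2 o' = o /\ (projT2 (D i)).1 o' = B) ->
  (forall i o', secv (j ((projT2 (D i)).2 o')) ((projT2 (D i)).1 o') =
       if v i then inl ((projT2 (D i)).1 o') else inr ((projT2 (D i)).1 o')) ->
  RR j (NN evp (RR eve s)) =
    \prod_i NN (projT2 (D i)).2 (RR (projT2 (D i)).1 (if v i then a else b)).
Proof.
move=> Hinj Hdisj Hcov Hbit.
rewrite tN_pb.
rewrite (@decompN_along gT S (gpb evp j) I (fun i => pcpb j (D i))); first last.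
- move=> w; have [i [o' [E1 E2]]] := Hcov (pb2 evp j w) (nab (eve (pb1 evp j w))).
  by exists i, o'; rewrite /= [RHS]mkpb_eta -E1 -E2.
- move=> i k o1 o2 /= /mkpb_inj [E1 E2]; exact: Hdisj E1 E2.
- move=> i o1 o2 /= /mkpb_inj [E1 E2]; exact: Hinj E1 E2.
apply: eq_bigr => i _ /=.
rewrite kp_pb2.
have -> : RR (kp j (projT2 (D i)).1 (projT2 (D i)).2) (RR (pb1 evp j) (RR eve s)) =
  RR (gcomp eve (gcomp (pb1 evp j) (kp j (projT2 (D i)).1 (projT2 (D i)).2))) s.
  by rewrite !tR_comp.
rewrite (kp_eval (Hbit i)) tR_comp.
by case: (v i); rewrite ?Ha ?Hb.
Qed.

Lemma gcompE (X Y Z : gset gT) (f : gmap Y Z) (h : gmap X Y) (u : X) : gcomp f h u = f (h u).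
Proof. by []. Qed.
Lemma gidE (X : gset gT) (u : X) : gid X u = u.
Proof. by []. Qed.

Lemma free_piece (s : tS S A) (a b : tS S Q) (Ha : RR (ginl Q Q) s = a)
  (Hb : RR (ginr Q Q) s = b) y : y \in coind t ->
  RR (Jg 1%G y) (NN evp (RR eve s)) =
  \prod_(i < p) weyl S (z ^+ i)%g (res_e_D2 S t (val2 a b y (z ^+ i)%g)).
Proof.
move=> Hy.
pose D := fun i : 'I_p => existT (fun O' : gset gT => (gmap O' Q * gmap O' E)%type) E
   (gcomp (oproj (sub1G H)) (rmul ((z ^+ i)^-1)%g), gid E).
have D1 : forall i, (projT2 (D i)).1 = gcomp (oproj (sub1G H)) (rmul ((z ^+ i)^-1)%g) by [].
have D2 : forall i, (projT2 (D i)).2 = gid E by [].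
rewrite (@piece_norm s a b Ha Hb _ (Jg 1%G y) 'I_p D (fun i => y (z ^+ i)%g)).
- apply: eq_bigr => i _; by rewrite D1 D2 tN_id tR_comp.
- by move=> i o1 o2; rewrite !D2 !gidE => ->.
- move=> i k o1 o2; rewrite !D1 !D2 !gidE => <-; have [g ->] := cosP o1.
  rewrite !gcompE !rmul_cos !oproj_cos.
  move/cosHzV_eq; rewrite !modn_small ?ltn_ord //; exact: ord_inj.
- move=> o B; have [g ->] := cosP o; have [x ->] := cosP B; have [m ->] := cos_nf g x.
  have lt : ((p - m) %% p < p)%N by rewrite ltn_mod prime_gt0.
  exists (Ordinal lt), (cos 1%G g); rewrite D1 D2 gidE gcompE rmul_cos oproj_cos /=.
  by rewrite zinv_sub // ltnW.
- move=> i o'; rewrite D1 D2 gidE gcompE; have [g ->] := cosP o'; rewrite rmul_cos oproj_cos.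
  apply: bitJ => c w; rewrite mem_cos1 mem_cos => /eqP -> Hw.
  have := @coindH y Hy _ (z ^+ i)%g (groupVr Hw).
  by rewrite invMg invgK -mulgA mulgKV.
Qed.

Lemma fix_piece (s : tS S A) (a b : tS S Q) (Ha : RR (ginl Q Q) s = a)
  (Hb : RR (ginr Q Q) s = b) r : r \in Xfix t ->
  RR (Jg H r) (NN evp (RR eve s)) =
  val2 a b r 1%g * \prod_(k < p./2) nm_e_D2 S t (weyl S (z ^+ k.+1)%g
                        (res_e_D2 S t (val2 a b r (z ^+ k.+1)%g))).
Proof.
move=> Hr; have Hrc := Xfix_coind Hr; have Hrt := Xfix_t Hr.
pose D0 := existT (fun O' : gset gT => (gmap O' Q * gmap O' Q)%type) Q (gid Q, gid Q).
pose DS := fun i : nat => existT (fun O' : gset gT => (gmap O' Q * gmap O' Q)%type) E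
   (gcomp (oproj (sub1G H)) (rmul ((z ^+ i)^-1)%g), oproj (sub1G H)).
pose D := fun i : 'I_(p./2).+1 => if (i == 0 :> nat) then D0 else DS (val i).
have DS1 : forall i, (projT2 (DS i)).1 = gcomp (oproj (sub1G H)) (rmul ((z ^+ i)^-1)%g) by [].
have DS2 : forall i, (projT2 (DS i)).2 = oproj (sub1G H) by [].
have D01 : (projT2 D0).1 = gid Q by [].
have D02 : (projT2 D0).2 = gid Q by [].
have ilt : forall i : 'I_(p./2).+1, (i < p)%N.
  move=> i; apply: (leq_trans (ltn_ord i)); exact: half_lt.
rewrite (@piece_norm s a b Ha Hb _ (Jg H r) _ D (fun i => r (z ^+ i)%g)).
- rewrite big_ord_recl /= tN_id tR_id expg0; congr (_ * _).
  apply: eq_bigr => i _; by rewrite /bump leq0n add1n tR_comp.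
-
  move=> i; rewrite /D; case: eqP => Hi0 o1 o2; first by rewrite D02 !gidE.
  rewrite DS1 DS2; have [g1 ->] := cosP o1; have [g2 ->] := cosP o2.
  rewrite !gcompE !rmul_cos !oproj_cos => /cosH_cases [->//|->].
  by rewrite cos_t_zV => /cosH_zVz /inv_self /(dvd_lt_0 (ilt i)).
- move=> i k; rewrite /D; case: eqP => Hi0; case: eqP => Hk0 o1 o2.
  + by move=> _ _; apply/eqP; rewrite -val_eqE /= Hi0 Hk0.
  + rewrite D01 D02 DS1 DS2 gidE; have [g ->] := cosP o2.
    rewrite gcompE rmul_cos !oproj_cos => -> /cos_zV_1 /(dvd_lt_0 (ilt k)) //.
  + rewrite D01 D02 DS1 DS2 gidE; have [g ->] := cosP o1.
    rewrite gcompE rmul_cos !oproj_cos => <- /esym /cos_zV_1 /(dvd_lt_0 (ilt i)) //.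
  + rewrite DS1 DS2; have [g1 ->] := cosP o1; have [g2 ->] := cosP o2.
    rewrite !gcompE !rmul_cos !oproj_cos => /cosH_cases [->|->].
      by move/cosH_zVzV/(zinj (ilt i) (ilt k)) => E; apply/eqP; rewrite -val_eqE /= E.
    rewrite cos_t_zV => /cosH_zVz E1; exfalso.
    have : (p %| i + k)%N by apply: z_eq1; rewrite expgD -E1 mulgV.
    apply/negP; apply: small_sum; rewrite ?lt0n; try (apply/eqP; assumption);
      by rewrite -ltnS ltn_ord.
- move=> o B; have [c ->] := cosP o; have [x ->] := cosP B; have [m ->] := cos_nf c x.
  have [m0|mpos] := posnP m.
    exists ord0; exists (cos H c : Q); by rewrite /= m0 expg0 mulg1.
  have [mh|mh] := leqP m p./2.
    have lt : (m < (p./2).+1)%N by rewrite ltnS.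
    exists (Ordinal lt); rewrite /D /= ifN_eq; last by rewrite -lt0n.
    exists (cos 1%G (c * t)%g); rewrite DS1 DS2 gcompE rmul_cos !oproj_cos cos_t_zV.
    by rewrite -[(c * t)%g]/((c * tb true)%g) cos_tb.
  have lt : (p - m < (p./2).+1)%N by have := hh; have := ltn_ord m; lia.
  exists (Ordinal lt); rewrite /D /= ifN_eq; last by rewrite -lt0n subn_gt0 ltn_ord.
  exists (cos 1%G c); rewrite DS1 DS2 gcompE rmul_cos !oproj_cos /=.
  by rewrite zinv_sub' // ltnW.
- move=> i; rewrite /D; case: eqP => Hi0 o'.
    rewrite D01 D02 gidE; have [c ->] := cosP o'; rewrite Hi0 expg0.
    apply: bitJ => c' w; rewrite !mem_cos => H1 H2.
    have := groupM (groupVr H2) H1; rewrite invMg invgK -mulgA mulKVg => Hh.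
    by rewrite -[(w^-1 * c')%g]mulg1 coindH.
  rewrite DS1 DS2 gcompE; have [g ->] := cosP o'; rewrite rmul_cos !oproj_cos.
  apply: bitJ => c w; rewrite !mem_cos => H1 H2.
  have E : (w^-1 * c = ((g * (z ^+ i)^-1)^-1 * w)^-1 * (z ^+ i * (g^-1 * c)))%g.
    by rewrite invMg invgK !mulgA mulgKV mulgK.
  rewrite E coindH ?groupVr //.
  by move: H1; rewrite memH => /orP[/eqP->|/eqP->]; rewrite ?mulg1 ?fix_t.
Qed.

Local Notation pip := (pi_proj nab qm).

Lemma const_piece (s : tS S A) (a b : tS S Q) (Ha : RR (ginl Q Q) s = a)
  (Hb : RR (ginr Q Q) s = b) (c : bool) :
  RR (Jg [set: gT]%G [ffun=> c]) (NN evp (RR eve s)) = NN qm (if c then a else b).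
Proof.
pose D := fun i : 'I_1 => existT (fun O' : gset gT => (gmap O' Q * gmap O' P)%type) Q (gid Q, qm).
have D1 : forall i, (projT2 (D i)).1 = gid Q by [].
have D2 : forall i, (projT2 (D i)).2 = qm by [].
rewrite (@piece_norm s a b Ha Hb _ (Jg [set: gT]%G [ffun=> c]) _ D (fun=> c)).
- by rewrite big_ord1 D1 D2 tR_id.
- by move=> i o1 o2; rewrite !D1 !gidE.
- by move=> i k _ _ _ _; rewrite !ord1.
- move=> o B; exists ord0; exists B; by rewrite D1 D2 gidE; split => //; exact: P_single.
- move=> i o'; rewrite D1 D2 gidE; have [x ->] := cosP o'.
  rewrite (P_single (qm (cos H x)) (cos [set: gT]%G 1%g)).
  by apply: bitJ => c' w _ _; rewrite ffunE.
Qed.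

Lemma pip_E y : gcomp pip (Jg 1%G y) = oproj (sub1G [set: gT]%G).
Proof. apply: gmap_ext => o; exact: P_single. Qed.
Lemma pip_H r : gcomp pip (Jg H r) = oproj (subsetT H).
Proof. apply: gmap_ext => o; exact: P_single. Qed.
Lemma pip_T f : gcomp pip (Jg [set: gT]%G f) = gid P.
Proof. apply: gmap_ext => o; exact: P_single. Qed.

Lemma prod_shift (F : nat -> tS S E) : F p = F 0%N ->
  \prod_(1 <= i < p.+1) F i = \prod_(i < p) F i.
Proof.
move=> Fp; have p0 := prime_gt0 pP.
by rewrite big_nat_recr // Fp -(big_mkord xpredT F) [in RHS]big_ltn // mulrC.
Qed.

Lemma half_eq : ((p - 1) %/ 2)%N = p./2.
Proof. by rewrite divn2 -{1}hh subn1 /= addnn doubleK. Qed.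

Lemma rearr (V : nmodType) (y x a b : V) : y + x + a + b = a + b + x + y.
Proof. by rewrite -addrA (addrC _ (a + b)) (addrC y x) addrA. Qed.

Theorem main (a b : tS S Q) (Y : {set {ffun gT -> bool}}) (hY : free_transversal t Y) :
  nm_D2_G S t (a + b) =
    nm_D2_G S t a + nm_D2_G S t b
    + \sum_(x in Xfix t)
        tr_D2_G S t (val2 a b x 1%g *
          \prod_(1 <= i < ((p - 1) %/ 2).+1)
            nm_e_D2 S t (weyl S (z ^+ i)%g (res_e_D2 S t (val2 a b x (z ^+ i)%g))))
    + \sum_(y in Y)
        tr_e_G S (\prod_(1 <= i < p.+1)
                    weyl S (z ^+ i)%g (res_e_D2 S t (val2 a b y (z ^+ i)%g))).
Proof.
have [g gK Kg] := t_sum S Q Q.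
pose s := g (a, b).
have Hab := Kg (a, b).
have Ha : RR (ginl Q Q) s = a by have := congr1 fst Hab.
have Hb : RR (ginr Q Q) s = b by have := congr1 snd Hab.
pose pcA := fun i : bool => if i then existT (fun O : gset gT => gmap O A) Q (ginl Q Q)
                                  else existT (fun O : gset gT => gmap O A) Q (ginr Q Q).
have Eab : a + b = TT nab s.
  rewrite (@decompT_along gT S A bool pcA); first last.
  - by case=> [x|x]; [exists true | exists false]; exists x.
  - by case; case => x y.
  - by case => x y [].
  rewrite big_bool /=.
  have -> : gcomp nab (ginl Q Q) = gid Q by apply: gmap_ext.
  have -> : gcomp nab (ginr Q Q) = gid Q by apply: gmap_ext.
  by rewrite !tT_id Ha Hb.
rewrite Eab /nm_D2_G (t_distr nab qm).
rewrite (@decompT_along gT S Pi _ (pcPi Y) (pcPi_inj hY) (@pcPi_disj Y hY) (pcPi_cov hY)).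
set W := NN evp (RR eve s).
pose GE f := tr_e_G S (\prod_(1 <= i < p.+1)
                    weyl S (z ^+ i)%g (res_e_D2 S t (val2 a b f (z ^+ i)%g))).
pose GQ f := tr_D2_G S t (val2 a b f 1%g *
          \prod_(1 <= i < ((p - 1) %/ 2).+1)
            nm_e_D2 S t (weyl S (z ^+ i)%g (res_e_D2 S t (val2 a b f (z ^+ i)%g)))).
have E : forall f, TT (gcomp pip (projT2 (pcPi Y f))) (RR (projT2 (pcPi Y f)) W) =
   (if f \in Y then GE f else 0) + (if f \in Xfix t then GQ f else 0) +
   (if f == fa then nm_D2_G S t a else 0) + (if f == fb then nm_D2_G S t b else 0).
  move=> f; case: (boolP (f \in Y)) => HY.
    have HX : f \notin Xfix t by apply/negP => /(X_notY hY); rewrite HY.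
    have Hfa : f != fa by apply/eqP => Ef; move: (const_notY hY true); rewrite -/fa -Ef HY.
    have Hfb : f != fb by apply/eqP => Ef; move: (const_notY hY false); rewrite -/fb -Ef HY.
    rewrite pcPi_Y // (negPf HX) (negPf Hfa) (negPf Hfb) !addr0 /=.
    rewrite pip_E (free_piece Ha Hb (Y_sub hY HY).1) /GE /tr_e_G; congr (TT _ _).
    rewrite (prod_shift (F := fun i => weyl S (z ^+ i)%g (res_e_D2 S t (val2 a b f (z ^+ i)%g)))) //.
    by rewrite /= zp expg0.
  case: (boolP (f \in Xfix t)) => HX.
    have Hfa : f != fa by apply/eqP => Ef; move: (const_notX true); rewrite -/fa -Ef HX.
    have Hfb : f != fb by apply/eqP => Ef; move: (const_notX false); rewrite -/fb -Ef HX.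
    rewrite pcPi_X // (negPf Hfa) (negPf Hfb) !addr0 add0r /=.
    rewrite pip_H (fix_piece Ha Hb HX) /GQ /tr_D2_G half_eq big_add1 /= big_mkord.
    done.
  case: (boolP (f == fa)) => Hfa.
    rewrite (eqP Hfa) (negPf fa_neq_fb) (pcPi_C (const_notY hY true) (const_notX true)) /=; last by rewrite eqxx.
    by rewrite pip_T tT_id (const_piece Ha Hb) ?add0r ?addr0.
  case: (boolP (f == fb)) => Hfb.
    rewrite (eqP Hfb) (pcPi_C (const_notY hY false) (const_notX false)) /=; last by rewrite eqxx orbT.
    by rewrite pip_T tT_id (const_piece Ha Hb) ?add0r ?addr0.
  rewrite pcPi_0 /=; last by rewrite /rep (negPf HY) (negPf HX) (negPf Hfa) (negPf Hfb).
  rewrite (@tS_empty _ S (gempty gT) _ (RR emptyPi W)) ?tT0 ?add0r //; by case.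
rewrite (eq_bigr _ (fun f _ => E f)) !big_split /= -!big_mkcond !big_pred1_eq.
rewrite -addrA (addrC _ (_ + _)) (addrC (\sum_(i in Y) GE i)) addrA.
done.
Qed.


End All.

Local Open Scope ring_scope.

Theorem lemma8p11 (gT : finGroupType) (tau zeta : gT) (p : nat)
  (S : tambara gT) (a b : tS S (gquot <[tau]>%G)) (Y : {set {ffun gT -> bool}}) :
  prime p -> odd p ->
  (tau ^+ 2 = 1)%g -> (zeta ^+ p = 1)%g -> ((tau * zeta) ^+ 2 = 1)%g ->
  <<[set tau; zeta]>>%g = [set: gT] -> #|gT| = (2 * p)%N ->
  free_transversal tau Y ->
  nm_D2_G S tau (a + b) =
    nm_D2_G S tau a + nm_D2_G S tau b
    + \sum_(x in Xfix tau)
        tr_D2_G S tau (val2 a b x 1%g *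
          \prod_(1 <= i < ((p - 1) %/ 2).+1)
            nm_e_D2 S tau (weyl S (zeta ^+ i)%g (res_e_D2 S tau (val2 a b x (zeta ^+ i)%g))))
    + \sum_(y in Y)
        tr_e_G S (\prod_(1 <= i < p.+1)
                    weyl S (zeta ^+ i)%g (res_e_D2 S tau (val2 a b y (zeta ^+ i)%g))).
Proof.
move=> pP pO t2 zp tz2 gen card hY.
exact (main pP pO t2 zp tz2 gen card a b hY).
Qed.
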